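(* Let $V\subseteq\mathbb R^d$ be a finite set of points and let $G=G(V,1)$ be the geometric graph on $V$ in which distinct $v,w$ are adjacent iff $\|v-w\|\le1$. Then $$\chi_f(G)=\sup_{\varphi\in\mathcal F}M(V,\varphi).$$
   Context: $\|\cdot\|$ is a norm on $\mathbb R^d$. $\chi_f(G)$ is the fractional chromatic number: the optimum of $\min 1^Tx$ s.t. $Ax\ge1,x\ge0$, with $A$ the vertex–stable-set incidence matrix of $G$. For $V\subseteq\mathbb R^d$ and nonnegative $\varphi$, $M(V,\varphi):=\sup_{x\in\mathbb R^d}\sum_{v\in V}\varphi(v-x)$. A set $S$ is well-spread if $\|v-w\|>1$ for all distinct $v,w\in S$; a nonnegative measurable $\varphi$ is feasible if $\sum_{v\in S}\varphi(v)\le1$ for every well-spread $S$; $\mathcal F$ is the set of feasible functions. *)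

(* Defs.v *)
From Stdlib Require Fin.
From Stdlib Require Import Reals List Classical ClassicalEpsilon.
Import ListNotations.
Open Scope R_scope.

Definition vec (d : nat) := Fin.t d -> R.
Definition vadd {d} (x y : vec d) : vec d := fun i => x i + y i.
Definition vopp {d} (x : vec d) : vec d := fun i => - x i.
Definition vsub {d} (x y : vec d) : vec d := fun i => x i - y i.
Definition vscal {d} (c : R) (x : vec d) : vec d := fun i => c * x i.
Definition vzero {d} : vec d := fun _ => 0.

Definition is_norm {d} (N : vec d -> R) : Prop :=
  (forall x, N x = 0 -> x = vzero) /\
  (forall c x, N (vscal c x) = Rabs c * N x) /\
  (forall x y, N (vadd x y) <= N x + N y).

Definition pb (P : Prop) : bool :=
  if excluded_middle_informative P then true else false.

Definition sumL {A} (f : A -> R) (l : list A) : R :=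
  fold_right (fun a acc => f a + acc) 0 l.

(** All sublists (the power set of a duplicate-free list). *)
Fixpoint subsets {A} (l : list A) : list (list A) :=
  match l with
  | [] => [[]]
  | a :: l' => map (cons a) (subsets l') ++ subsets l'
  end.

Definition adjacent {d} (N : vec d -> R) (v w : vec d) : Prop :=
  v <> w /\ N (vsub v w) <= 1.

Definition stable {d} (N : vec d -> R) (S : list (vec d)) : Prop :=
  forall v w, In v S -> In w S -> ~ adjacent N v w.

(** The stable sets of G(V,1), i.e. the columns of the vertex--stable-set
    incidence matrix A. *)
Definition stable_sets {d} (N : vec d -> R) (V : list (vec d)) :=
  filter (fun S => pb (stable N S)) (subsets V).

(** Feasible points of the LP  A x >= 1, x >= 0  (x indexed by stable sets). *)
Definition frac_col_feasible {d} (N : vec d -> R) (V : list (vec d))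
    (x : list (vec d) -> R) : Prop :=
  (forall S, In S (stable_sets N V) -> 0 <= x S) /\
  (forall v, In v V ->
     1 <= sumL x (filter (fun S => pb (In v S)) (stable_sets N V))).

Definition frac_col_value {d} (N : vec d -> R) (V : list (vec d))
    (x : list (vec d) -> R) : R :=
  sumL x (stable_sets N V).

(** c is the optimum of min 1^T x s.t. Ax >= 1, x >= 0, i.e. c = chi_f(G). *)
Definition is_frac_chrom {d} (N : vec d -> R) (V : list (vec d)) (c : R) : Prop :=
  (exists x, frac_col_feasible N V x /\ frac_col_value N V x = c) /\
  (forall x, frac_col_feasible N V x -> c <= frac_col_value N V x).

Definition well_spread {d} (N : vec d -> R) (S : vec d -> Prop) : Prop :=
  forall v w, S v -> S w -> v <> w -> N (vsub v w) > 1.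

Definition open_set {d} (N : vec d -> R) (U : vec d -> Prop) : Prop :=
  forall x, U x -> exists r, 0 < r /\ forall y, N (vsub y x) < r -> U y.

Definition sigma_algebra {d} (Sig : (vec d -> Prop) -> Prop) : Prop :=
  Sig (fun _ => False) /\
  (forall A, Sig A -> Sig (fun x => ~ A x)) /\
  (forall An : nat -> vec d -> Prop, (forall n, Sig (An n)) ->
     Sig (fun x => exists n, An n x)).

Definition borel {d} (N : vec d -> R) (A : vec d -> Prop) : Prop :=
  forall Sig : (vec d -> Prop) -> Prop, sigma_algebra Sig ->
    (forall U, open_set N U -> Sig U) -> Sig A.

Definition measurable_fun {d} (N : vec d -> R) (phi : vec d -> R) : Prop :=
  forall a, borel N (fun x => a < phi x).

(** The sum of nonnegative terms over an arbitrary
    set is the supremum of its finite partial sums, so this is expressed via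
    finite duplicate-free lists contained in S. *)
Definition feasible_fun {d} (N : vec d -> R) (phi : vec d -> R) : Prop :=
  (forall x, 0 <= phi x) /\ measurable_fun N phi /\
  (forall S : vec d -> Prop, well_spread N S ->
     forall L : list (vec d), NoDup L -> (forall v, In v L -> S v) ->
       sumL phi L <= 1).

Definition is_M {d} (V : list (vec d)) (phi : vec d -> R) (m : R) : Prop :=
  is_lub (fun s => exists x : vec d, s = sumL (fun v => phi (vsub v x)) V) m.

(* Main.v *)
Require Import Defs.
From Stdlib Require Import Reals List Lra Lia Psatz Classical ClassicalEpsilon FunctionalExtensionality PropExtensionality Permutation FinFun.
Import ListNotations.
Open Scope R_scope.

Lemma sumL_cons {A} (f : A -> R) a l : sumL f (a::l) = f a + sumL f l.
Proof. reflexivity. Qed.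

Lemma sumL_ext {A} (f g : A -> R) l : (forall x, In x l -> f x = g x) -> sumL f l = sumL g l.
Proof. induction l; simpl; intros H; auto. rewrite H, IHl; auto. Qed.

Lemma sumL_le {A} (f g : A -> R) l : (forall x, In x l -> f x <= g x) -> sumL f l <= sumL g l.
Proof. induction l; simpl; intros H. lra. specialize (IHl (fun x h => H x (or_intror h))).
  specialize (H a (or_introl eq_refl)). lra. Qed.

Lemma sumL_add {A} (f g : A -> R) l : sumL (fun x => f x + g x) l = sumL f l + sumL g l.
Proof. induction l; simpl; lra. Qed.

Lemma sumL_scal {A} (c : R) (f : A -> R) l : sumL (fun x => c * f x) l = c * sumL f l.
Proof. induction l; simpl; [ring|rewrite IHl; ring]. Qed.

Lemma sumL_zero {A} (l : list A) : sumL (fun _ => 0) l = 0.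
Proof. induction l; simpl; lra. Qed.

Lemma sumL_map {A B} (f : B -> R) (g : A -> B) l : sumL f (map g l) = sumL (fun x => f (g x)) l.
Proof. induction l; simpl; congruence. Qed.

Lemma sumL_perm {A} (f : A -> R) l l' : Permutation l l' -> sumL f l = sumL f l'.
Proof. induction 1; simpl; lra. Qed.

Lemma sumL_swap {A B} (f : A -> B -> R) la lb :
  sumL (fun a => sumL (fun b => f a b) lb) la = sumL (fun b => sumL (fun a => f a b) la) lb.
Proof. induction la; simpl. rewrite sumL_zero; reflexivity. rewrite IHla, sumL_add. reflexivity. Qed.

Lemma sum_filter {A} (f : A -> R) (b : A -> bool) l :
  sumL f (filter b l) = sumL (fun x => if b x then f x else 0) l.
Proof. induction l; simpl; auto. destruct (b a); simpl; lra. Qed.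

Lemma sum_single {A} (f : A -> R) l a : NoDup l -> In a l ->
  (forall x, In x l -> x <> a -> f x = 0) -> sumL f l = f a.
Proof.
  induction l as [|a0 l IH]; intros Hnd Ha H; [destruct Ha|].
  apply NoDup_cons_iff in Hnd as [Hn Hnd]. simpl.
  destruct (classic (a0 = a)) as [<-|Hne].
  - rewrite (sumL_ext _ (fun _ => 0)), sumL_zero. ring.
    intros x Hx. apply H. right; auto. intros ->; contradiction.
  - rewrite H by (simpl; auto). destruct Ha as [->|Ha]; [contradiction|].
    rewrite IH; auto. ring. intros x Hx; apply H; simpl; auto.
Qed.

Lemma sum_nonneg_elem {A} (f : A -> R) l a : In a l -> (forall x, In x l -> 0 <= f x) -> f a <= sumL f l.
Proof.
  induction l; simpl; intros Ha H; [destruct Ha|].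
  assert (0 <= f a0) by auto. assert (0 <= sumL f l).
  { rewrite <- (sumL_zero l). apply sumL_le. intros; auto. }
  destruct Ha as [->|Ha]. lra. specialize (IHl Ha (fun x h => H x (or_intror h))). lra.
Qed.

Lemma pb_true (P : Prop) : P -> pb P = true.
Proof. unfold pb; destruct (excluded_middle_informative P); auto; contradiction. Qed.
Lemma pb_false (P : Prop) : ~ P -> pb P = false.
Proof. unfold pb; destruct (excluded_middle_informative P); auto; contradiction. Qed.
Lemma pb_spec (P : Prop) : pb P = true -> P.
Proof. unfold pb; destruct (excluded_middle_informative P); auto; discriminate. Qed.
Lemma pb_iff (P Q : Prop) : (P <-> Q) -> pb P = pb Q.
Proof. intros H. destruct (classic P). rewrite !pb_true; tauto. rewrite !pb_false; tauto. Qed.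

Lemma sum_inter {A} (f : A -> R) (a b : list A) : NoDup a -> NoDup b ->
  sumL f (filter (fun x => pb (In x b)) a) = sumL f (filter (fun x => pb (In x a)) b).
Proof.
  intros Ha Hb. apply sumL_perm. apply NoDup_Permutation; try apply NoDup_filter; auto.
  intros x. rewrite !filter_In. split; intros [H1 H2]; apply pb_spec in H2; split; auto; apply pb_true; auto.
Qed.

(* Farkas via Fourier-Motzkin *)
Definition cstr (K : Type) := ((K -> R) * R)%type.
Definition dot {K} (ks : list K) (a z : K -> R) := sumL (fun k => a k * z k) ks.
Definition cadd {K} (c1 c2 : cstr K) : cstr K := (fun k => fst c1 k + fst c2 k, snd c1 + snd c2).
Definition cscale {K} (l : R) (c : cstr K) : cstr K := (fun k => l * fst c k, l * snd c).

Inductive deriv {K} (L : list (cstr K)) : cstr K -> Prop :=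
| d_in : forall c, In c L -> deriv L c
| d_add : forall c1 c2, deriv L c1 -> deriv L c2 -> deriv L (cadd c1 c2)
| d_scale : forall l c, 0 <= l -> deriv L c -> deriv L (cscale l c).

Lemma deriv_mono {K} (L L2 : list (cstr K)) c : deriv L c -> (forall c', In c' L -> deriv L2 c') -> deriv L2 c.
Proof. induction 1; intros H'; [auto| apply d_add; auto | apply d_scale; auto]. Qed.

Lemma deriv_zero_at {K} (L : list (cstr K)) k c : deriv L c -> (forall c', In c' L -> fst c' k = 0) -> fst c k = 0.
Proof. induction 1; intros H'; simpl;
  [auto | rewrite IHderiv1, IHderiv2 by auto; ring | rewrite IHderiv by auto; ring]. Qed.

Lemma dot_cons {K} k (ks : list K) a z : dot (k::ks) a z = a k * z k + dot ks a z.
Proof. reflexivity. Qed.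

Lemma dot_lin {K} (ks : list K) al be a b z :
  dot ks (fun j => al * a j + be * b j) z = al * dot ks a z + be * dot ks b z.
Proof. unfold dot; induction ks; simpl; [ring | rewrite IHks; ring]. Qed.

Lemma dot_ext_z {K} (ks : list K) a z z' : (forall j, In j ks -> z j = z' j) -> dot ks a z = dot ks a z'.
Proof. intros H; unfold dot; apply sumL_ext; intros; rewrite H; auto. Qed.

Lemma sep_lemma (U Lo : list R) : (forall u l, In u U -> In l Lo -> l <= u) ->
  exists t, (forall u, In u U -> t <= u) /\ (forall l, In l Lo -> l <= t).
Proof.
  induction U as [|u U IH]; intros H.
  - clear H. induction Lo as [|l Lo IHL].
    + exists 0. simpl; split; intros; contradiction.
    + destruct IHL as [t [_ Ht]]. exists (Rmax l t). split. intros _ [].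
      intros l' [<-|Hl']. apply Rmax_l. eapply Rle_trans; [apply Ht; auto | apply Rmax_r].
  - destruct IH as [t [Ht1 Ht2]]. intros; apply H; simpl; auto.
    exists (Rmin u t). split.
    + intros u' [<-|Hu']. apply Rmin_l. eapply Rle_trans; [apply Rmin_r| auto].
    + intros l Hl. apply Rmin_glb. apply H; simpl; auto. auto.
Qed.

Theorem farkas {K} (ks : list K) : NoDup ks -> forall (L : list (cstr K)),
  (exists z, forall c, In c L -> dot ks (fst c) z <= snd c) \/
  (exists c, deriv L c /\ (forall k, In k ks -> fst c k = 0) /\ snd c < 0).
Proof.
  induction ks as [|k ks IH]; intros Hnd L.
  - destruct (classic (exists c, In c L /\ snd c < 0)) as [[c [Hc Hs]]|Hn].
    + right. exists c. split; [constructor; auto| split; [intros _ []|auto]].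
    + left. exists (fun _ => 0). intros c Hc. unfold dot; simpl.
      apply Rnot_lt_le. intros Hlt. apply Hn. eauto.
  - apply NoDup_cons_iff in Hnd as [Hk Hnd].
    set (P := filter (fun c : cstr K => pb (0 < fst c k)) L).
    set (Nn := filter (fun c : cstr K => pb (fst c k < 0)) L).
    set (Z := filter (fun c : cstr K => pb (fst c k = 0)) L).
    set (comb := fun p q : cstr K => cadd (cscale (- fst q k) p) (cscale (fst p k) q)).
    set (L' := Z ++ flat_map (fun p => map (fun q => comb p q) Nn) P).
    assert (HL'd : forall c, In c L' -> deriv L c).
    { intros c Hc. apply in_app_or in Hc as [Hc|Hc].
      - apply filter_In in Hc as [Hc _]. constructor; auto.
      - apply in_flat_map in Hc as [p [Hp Hc]]. apply in_map_iff in Hc as [q [<- Hq]].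
        apply filter_In in Hp as [Hp Hp']. apply pb_spec in Hp'.
        apply filter_In in Hq as [Hq Hq']. apply pb_spec in Hq'.
        apply d_add; apply d_scale; try (constructor; auto); lra. }
    assert (HL'k : forall c, In c L' -> fst c k = 0).
    { intros c Hc. apply in_app_or in Hc as [Hc|Hc].
      - apply filter_In in Hc as [_ Hc]. apply pb_spec in Hc. auto.
      - apply in_flat_map in Hc as [p [Hp Hc]]. apply in_map_iff in Hc as [q [<- Hq]].
        unfold comb, cadd, cscale; simpl. ring. }
    destruct (IH Hnd L') as [[z' Hz']|[c [Hc1 [Hc2 Hc3]]]].
    + left.
      assert (Hpq : forall p q, In p P -> In q Nn ->
        (snd q - dot ks (fst q) z') / fst q k <= (snd p - dot ks (fst p) z') / fst p k).
      { intros p q Hp Hq.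
        assert (In (comb p q) L') as Hin.
        { apply in_or_app; right. apply in_flat_map. exists p; split; auto. apply in_map_iff; eauto. }
        pose proof (Hz' (comb p q) Hin) as Hc.
        apply filter_In in Hp as [_ Hp']. apply pb_spec in Hp'.
        apply filter_In in Hq as [_ Hq']. apply pb_spec in Hq'.
        unfold comb, cadd, cscale in Hc; simpl in Hc.
        rewrite dot_lin in Hc.
        set (ap := fst p k) in *. set (aq := fst q k) in *.
        set (Up := (snd p - dot ks (fst p) z') / ap). set (Lq := (snd q - dot ks (fst q) z') / aq).
        assert (E1 : dot ks (fst p) z' = snd p - ap * Up) by (unfold Up; field; lra).
        assert (E2 : dot ks (fst q) z' = snd q - aq * Lq) by (unfold Lq; field; lra).
        rewrite E1, E2 in Hc.
        destruct (Rle_or_lt Lq Up) as [|Hlt]; auto.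
        assert (0 < ap * (- aq) * (Lq - Up)) by (apply Rmult_lt_0_compat; [apply Rmult_lt_0_compat|]; lra).
        nra. }
      destruct (sep_lemma (map (fun p => (snd p - dot ks (fst p) z') / fst p k) P)
                          (map (fun q => (snd q - dot ks (fst q) z') / fst q k) Nn)) as [t [Ht1 Ht2]].
      { intros u l Hu Hl. apply in_map_iff in Hu as [p [<- Hp]].
        apply in_map_iff in Hl as [q [<- Hq]]. auto. }
      exists (fun j => if pb (j = k) then t else z' j).
      intros c Hc. rewrite dot_cons, (dot_ext_z ks _ _ z').
      2:{ intros j Hj. rewrite pb_false; auto. intros ->; contradiction. }
      rewrite pb_true by reflexivity.
      destruct (Rtotal_order 0 (fst c k)) as [Hpos|[Hzero|Hneg]].
      * assert (HP: In c P) by (apply filter_In; split; auto; apply pb_true; auto).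
        specialize (Ht1 _ (in_map (fun p => (snd p - dot ks (fst p) z') / fst p k) _ _ HP)).
        simpl in Ht1.
        set (u := (snd c - dot ks (fst c) z') / fst c k) in *.
        assert (snd c - dot ks (fst c) z' = fst c k * u) by (unfold u; field; lra).
        nra.
      * assert (HZ: In c L') by (apply in_or_app; left; apply filter_In; split; auto; apply pb_true; auto).
        specialize (Hz' c HZ). rewrite <- Hzero. lra.
      * assert (HN: In c Nn) by (apply filter_In; split; auto; apply pb_true; auto).
        specialize (Ht2 _ (in_map (fun q => (snd q - dot ks (fst q) z') / fst q k) _ _ HN)).
        simpl in Ht2.
        set (u := (snd c - dot ks (fst c) z') / fst c k) in *.
        assert (snd c - dot ks (fst c) z' = fst c k * u) by (unfold u; field; lra).
        nra.
    + right. exists c. split; [|split].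
      * eapply deriv_mono; eauto.
      * intros j [<-|Hj]; auto. eapply deriv_zero_at; eauto.
      * auto.
Qed.

Lemma vscal0 {d} (x : vec d) : vscal 0 x = vzero.
Proof. apply functional_extensionality; intros i; unfold vscal, vzero; ring. Qed.

Lemma norm_nonneg {d} (N : vec d -> R) : is_norm N -> forall x, 0 <= N x.
Proof.
  intros [H1 [H2 H3]] x.
  assert (E0 : N vzero = 0). { rewrite <- (vscal0 vzero), H2, Rabs_R0. ring. }
  assert (E1 : vadd x (vscal (-1) x) = vzero)
    by (apply functional_extensionality; intros i; unfold vadd, vscal, vzero; ring).
  pose proof (H3 x (vscal (-1) x)) as H. rewrite E1, E0, H2 in H. rewrite (Rabs_left (-1)) in H by lra. lra.
Qed.

Lemma borel_ext {d} (N : vec d -> R) (A B : vec d -> Prop) :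
  (forall x, A x <-> B x) -> borel N A -> borel N B.
Proof. intros H HA. replace B with A; auto. apply functional_extensionality; intros x;
  apply propositional_extensionality; auto. Qed.

Lemma borel_compl {d} (N : vec d -> R) A : borel N A -> borel N (fun x => ~ A x).
Proof. intros HA Sig HS Ho. pose proof HS as [H0 [Hc Hu]]. apply Hc. apply HA; auto. Qed.

Lemma borel_union {d} (N : vec d -> R) A B : borel N A -> borel N B -> borel N (fun x => A x \/ B x).
Proof.
  intros HA HB Sig HS Ho. pose proof HS as [H0 [Hc Hu]].
  set (An := fun n : nat => match n with O => A | _ => B end).
  assert (E : (fun x => A x \/ B x) = (fun x => exists n, An n x)).
  { apply functional_extensionality; intros x; apply propositional_extensionality. split.
    intros [a|b]; [exists O | exists 1%nat]; auto. intros [[|n] h]; simpl in h; auto. }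
  rewrite E. apply Hu. intros [|n]; simpl; [apply HA|apply HB]; auto.
Qed.

Lemma borel_empty {d} (N : vec d -> R) : borel N (fun _ => False).
Proof. intros Sig HS Ho. destruct HS as [H _]; exact H. Qed.

Lemma borel_full {d} (N : vec d -> R) : borel N (fun _ => True).
Proof. eapply borel_ext; [|apply borel_compl, borel_empty]. simpl; tauto. Qed.

Lemma borel_neq {d} (N : vec d -> R) (HN : is_norm N) p : borel N (fun u => u <> p).
Proof.
  intros Sig HS Ho. apply Ho. intros u Hu. exists (N (vsub p u)). split.
  - destruct (norm_nonneg N HN (vsub p u)) as [|E]; auto. exfalso.
    destruct HN as [H1 _]. symmetry in E. apply H1 in E. apply Hu.
    apply functional_extensionality; intros i. apply (f_equal (fun f => f i)) in E.
    unfold vsub, vzero in E. lra.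
  - intros y Hy ->. lra.
Qed.

Lemma borel_eq {d} (N : vec d -> R) (HN : is_norm N) p : borel N (fun u => u = p).
Proof. eapply borel_ext; [|apply borel_compl, (borel_neq N HN p)]. intros u; split; intros H.
  apply NNPP; auto. auto. Qed.

Lemma borel_fin {d} (N : vec d -> R) (HN : is_norm N) (F : list (vec d)) (P : vec d -> Prop) (Q : Prop) :
  borel N (fun u => (In u F /\ P u) \/ (~ In u F /\ Q)).
Proof.
  induction F as [|p F IH].
  - destruct (classic Q) as [HQ|HQ].
    + eapply borel_ext; [|apply borel_full]. simpl; tauto.
    + eapply borel_ext; [|apply borel_empty]. simpl; tauto.
  - assert (p = p) by reflexivity.
    destruct (classic (P p)) as [HP|HP].
    + eapply borel_ext; [|apply (borel_union N _ _ (borel_eq N HN p) IH)].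
      intros u. simpl. destruct (classic (u = p)) as [->|Hne].
      * tauto.
      * assert (p <> u) by auto. tauto.
    + eapply borel_ext; [|apply (borel_compl N _ (borel_union N _ _ (borel_eq N HN p) (borel_compl N _ IH)))].
      intros u. simpl. destruct (classic (u = p)) as [->|Hne].
      * tauto.
      * assert (p <> u) by auto.
        destruct (classic (In u F /\ P u \/ ~ In u F /\ Q)); tauto.
Qed.

Lemma subsets_nil {A} (l : list A) : In [] (subsets l).
Proof. induction l; simpl; auto. apply in_or_app; right; auto. Qed.

Lemma subsets_single {A} (l : list A) v : In v l -> In [v] (subsets l).
Proof. induction l; simpl; intros H; [destruct H|]. apply in_or_app. destruct H as [->|H].
  left. apply in_map. apply subsets_nil. right; auto. Qed.

Lemma subsets_filter {A} (l : list A) f : In (filter f l) (subsets l).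
Proof. induction l; simpl; auto. destruct (f a); apply in_or_app; [left; apply in_map|right]; auto. Qed.

Lemma subsets_incl {A} (l : list A) S : In S (subsets l) -> incl S l.
Proof.
  revert S; induction l; simpl; intros S H.
  - destruct H as [<-|[]]. intros x [].
  - apply in_app_or in H as [H|H].
    + apply in_map_iff in H as [S' [<- HS']]. apply incl_cons. left; auto.
      apply incl_tl; auto.
    + apply incl_tl; auto.
Qed.

Lemma subsets_NoDup {A} (l : list A) : NoDup l -> NoDup (subsets l).
Proof.
  induction l; simpl; intros H. constructor; [intros []|constructor].
  apply NoDup_cons_iff in H as [Ha Hl]. apply NoDup_app.
  - apply Injective_map_NoDup; auto. intros x y E; injection E; auto.
  - auto.
  - intros S HS HS'. apply in_map_iff in HS as [S' [<- _]].
    apply subsets_incl in HS'. apply Ha, HS'. left; auto.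
Qed.

Lemma single_stable {d} (N : vec d -> R) V v : In v V -> In [v] (stable_sets N V).
Proof.
  intros Hv. apply filter_In; split. apply subsets_single; auto. apply pb_true.
  intros a b [<-|[]] [<-|[]] [H _]. auto.
Qed.

Lemma one_feasible {d} (N : vec d -> R) V : frac_col_feasible N V (fun _ => 1).
Proof.
  split. intros; lra. intros v Hv.
  apply (sum_nonneg_elem (fun _ => 1) _ [v]).
  - apply filter_In; split. apply single_stable; auto. apply pb_true; simpl; auto.
  - intros; lra.
Qed.

Lemma weak_dual {d} (N : vec d -> R) V x (y : vec d -> R) :
  frac_col_feasible N V x -> (forall v, In v V -> 0 <= y v) ->
  (forall S, In S (stable_sets N V) -> sumL (fun v => if pb (In v S) then y v else 0) V <= 1) ->
  sumL y V <= frac_col_value N V x.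
Proof.
  intros [Hx0 Hx1] Hy HS. unfold frac_col_value.
  apply Rle_trans with (sumL (fun v => sumL (fun S => if pb (In v S) then y v * x S else 0) (stable_sets N V)) V).
  { apply sumL_le. intros v Hv. specialize (Hx1 v Hv). rewrite sum_filter in Hx1.
    rewrite (sumL_ext _ (fun S => y v * (if pb (In v S) then x S else 0))).
    2:{ intros S _. destruct (pb (In v S)); ring. }
    rewrite sumL_scal. specialize (Hy v Hv). nra. }
  rewrite sumL_swap.
  apply Rle_trans with (sumL (fun S => x S * 1) (stable_sets N V)).
  { apply sumL_le. intros S HS'. rewrite (sumL_ext _ (fun v => x S * (if pb (In v S) then y v else 0))).
    2:{ intros v _. destruct (pb (In v S)); ring. }
    rewrite sumL_scal. apply Rmult_le_compat_l; auto. }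
  right. apply sumL_ext; intros; ring.
Qed.

Lemma feasible_stable_bound {d} (N : vec d -> R) V phi x S : NoDup V -> feasible_fun N phi ->
  In S (stable_sets N V) -> sumL (fun v => if pb (In v S) then phi (vsub v x) else 0) V <= 1.
Proof.
  intros HV [H0 [_ H2]] HS. apply filter_In in HS as [_ HS]. apply pb_spec in HS.
  assert (E : sumL (fun v => if pb (In v S) then phi (vsub v x) else 0) V =
     sumL phi (map (fun v => vsub v x) (filter (fun v => pb (In v S)) V)))
    by (rewrite sumL_map, sum_filter; reflexivity).
  rewrite E.
  apply (H2 (fun u => In u (map (fun v => vsub v x) (filter (fun v => pb (In v S)) V)))).
  - intros u w Hu Hw Hne. apply in_map_iff in Hu as [v [<- Hv]]. apply in_map_iff in Hw as [w' [<- Hw']].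
    apply filter_In in Hv as [_ Hv]; apply pb_spec in Hv.
    apply filter_In in Hw' as [_ Hw']; apply pb_spec in Hw'.
    assert (E2 : vsub (vsub v x) (vsub w' x) = vsub v w')
      by (apply functional_extensionality; intros i; unfold vsub; ring).
    rewrite E2. assert (v <> w') by (intros ->; auto).
    specialize (HS v w' Hv Hw'). unfold adjacent in HS. apply Rnot_le_lt. intros Hle; apply HS; auto.
  - apply Injective_map_NoDup. intros a b Hab. apply functional_extensionality; intros i.
    apply (f_equal (fun f => f i)) in Hab. unfold vsub in Hab. lra.
    apply NoDup_filter; auto.
  - auto.
Qed.

Lemma sum_le_value {d} (N : vec d -> R) V phi x y0 : NoDup V -> feasible_fun N phi ->
  frac_col_feasible N V x -> sumL (fun v => phi (vsub v y0)) V <= frac_col_value N V x.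
Proof.
  intros HV Hphi Hx. apply weak_dual; auto.
  intros v _; apply (proj1 Hphi). intros S HS; apply (feasible_stable_bound N); auto.
Qed.

Lemma M_exists {d} (N : vec d -> R) V phi : NoDup V -> feasible_fun N phi -> exists m, is_M V phi m.
Proof.
  intros HV Hphi.
  destruct (completeness (fun s => exists x : vec d, s = sumL (fun v => phi (vsub v x)) V)) as [m Hm].
  { exists (frac_col_value N V (fun _ => 1)). intros s [y ->]. apply sum_le_value; auto. apply one_feasible. }
  { exists (sumL (fun v => phi (vsub v vzero)) V), vzero; reflexivity. }
  exists m. exact Hm.
Qed.

Definition phiV {d} (V : list (vec d)) (y : vec d -> R) : vec d -> R :=
  fun u => if pb (In u V) then y u else 0.

Lemma phiV_feasible {d} (N : vec d -> R) V y : is_norm N -> NoDup V -> (forall u, 0 <= y u) ->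
  (forall S, In S (stable_sets N V) -> sumL (fun v => if pb (In v S) then y v else 0) V <= 1) ->
  feasible_fun N (phiV V y).
Proof.
  intros HN HV Hy HS. split; [|split].
  - intros u; unfold phiV; destruct (pb (In u V)); auto; lra.
  - intros a. eapply borel_ext; [|apply (borel_fin N HN V (fun u => a < y u) (a < 0))].
    intros u; unfold phiV. destruct (classic (In u V)) as [H|H].
    + rewrite pb_true by auto. tauto.
    + rewrite pb_false by auto. tauto.
  - intros W HW L HL HLW.
    set (S2 := filter (fun v => pb (In v L)) V).
    assert (HS2 : In S2 (stable_sets N V)).
    { apply filter_In; split. apply subsets_filter. apply pb_true.
      intros v w Hv Hw [Hne Hle]. apply filter_In in Hv as [_ Hv]; apply pb_spec in Hv.
      apply filter_In in Hw as [_ Hw]; apply pb_spec in Hw.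
      specialize (HW v w (HLW v Hv) (HLW w Hw) Hne). lra. }
    specialize (HS S2 HS2).
    assert (E : sumL (phiV V y) L = sumL y (filter (fun u => pb (In u V)) L))
      by (unfold phiV; rewrite sum_filter; reflexivity).
    rewrite E, sum_inter by auto. rewrite sum_filter.
    rewrite (sumL_ext _ (fun v => if pb (In v S2) then y v else 0)); auto.
    intros v Hv. rewrite (pb_iff (In v S2) (In v L)); auto.
    unfold S2. rewrite filter_In. split; [intros [_ H]; apply pb_spec; auto|intros H; split; auto; apply pb_true; auto].
Qed.

Theorem lemma5p1 (d : nat) (N : vec d -> R) (HN : is_norm N)
    (V : list (vec d)) (HV : NoDup V) :
  exists c : R, is_frac_chrom N V c /\
    is_lub (fun m => exists phi, feasible_fun N phi /\ is_M V phi m) c.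
Proof.
  assert (HSS : NoDup (stable_sets N V)) by (apply NoDup_filter, subsets_NoDup; auto).
  assert (HTub : forall x, frac_col_feasible N V x ->
    is_upper_bound (fun m => exists phi, feasible_fun N phi /\ is_M V phi m) (frac_col_value N V x)).
  { intros x Hx m [phi [Hphi HM]]. apply HM. intros s [y0 ->]. apply sum_le_value; auto. }
  assert (Hf0 : feasible_fun N (phiV V (fun _ => 0))).
  { apply phiV_feasible; auto. intros; lra. intros S _.
    rewrite (sumL_ext _ (fun _ => 0)), sumL_zero. lra. intros v _; destruct (pb (In v S)); reflexivity. }
  destruct (completeness (fun m => exists phi, feasible_fun N phi /\ is_M V phi m)) as [cs Hcs].
  { exists (frac_col_value N V (fun _ => 1)). apply HTub, one_feasible. }
  { destruct (M_exists N V _ HV Hf0) as [m Hm]. exists m, (phiV V (fun _ => 0)). auto. }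
  exists cs. split; [|exact Hcs].
  assert (Hlow : forall x, frac_col_feasible N V x -> cs <= frac_col_value N V x).
  { intros x Hx. apply Hcs. apply HTub; auto. }
  split; [|exact Hlow].
  set (Lc := map (fun S0 => ((fun S => if pb (S = S0) then -1 else 0), 0)) (stable_sets N V)
          ++ map (fun v => ((fun S => if pb (In v S) then -1 else 0), -1)) V
          ++ [((fun _ => 1), cs)]).
  destruct (farkas (stable_sets N V) HSS Lc) as [[z Hz]|[c [Hc1 [Hc2 Hc3]]]].
  - exists z. assert (Hzf : frac_col_feasible N V z).
    { split.
      - intros S0 HS0.
        assert (H : In ((fun S => if pb (S = S0) then -1 else 0), 0) Lc)
          by (apply in_or_app; left; apply in_map_iff; eauto).
        specialize (Hz _ H). simpl in Hz. unfold dot in Hz.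
        rewrite (sum_single _ (stable_sets N V) S0) in Hz; auto.
        rewrite pb_true in Hz by reflexivity. lra.
        intros S _ Hne. rewrite pb_false by auto. ring.
      - intros v Hv.
        assert (H : In ((fun S => if pb (In v S) then -1 else 0), -1) Lc)
          by (apply in_or_app; right; apply in_or_app; left; apply in_map_iff; eauto).
        specialize (Hz _ H). simpl in Hz. unfold dot in Hz.
        rewrite sum_filter.
        rewrite (sumL_ext _ (fun S => -1 * (if pb (In v S) then z S else 0))) in Hz.
        rewrite sumL_scal in Hz. lra.
        intros S _; destruct (pb (In v S)); ring. }
    split; auto.
    assert (H : In ((fun _ => 1), cs) Lc)
      by (apply in_or_app; right; apply in_or_app; right; simpl; auto).
    specialize (Hz _ H). simpl in Hz. unfold dot in Hz.
    rewrite (sumL_ext _ z) in Hz by (intros; ring).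
    specialize (Hlow z Hzf). unfold frac_col_value in *. lra.
  - exfalso.
    assert (HQ : exists lam y mu, 0 <= lam /\ (forall u, 0 <= y u) /\ (forall S, 0 <= mu S) /\
        (forall S, fst c S = - sumL (fun v => if pb (In v S) then y v else 0) V - mu S + lam) /\
        snd c = - sumL y V + lam * cs).
    { clear Hc2 Hc3. induction Hc1 as [c Hc|c1 c2 _ IH1 _ IH2|l c Hl _ IH].
      - apply in_app_or in Hc as [Hc|Hc]; [|apply in_app_or in Hc as [Hc|Hc]].
        + apply in_map_iff in Hc as [S0 [<- HS0]].
          exists 0, (fun _ => 0), (fun S => if pb (S = S0) then 1 else 0).
          split; [lra|split; [intros; lra|split; [intros S; destruct (pb (S=S0)); lra|split]]].
          * intros S; simpl. rewrite (sumL_ext _ (fun _ => 0)), sumL_zero. destruct (pb (S = S0)); ring.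
            intros v _; destruct (pb (In v S)); reflexivity.
          * simpl. rewrite sumL_zero. ring.
        + apply in_map_iff in Hc as [v [<- Hv]].
          exists 0, (fun u => if pb (u = v) then 1 else 0), (fun _ => 0).
          split; [lra|split; [intros u; destruct (pb (u=v)); lra|split; [intros; lra|split]]].
          * intros S; simpl. rewrite (sum_single _ V v HV Hv). rewrite (pb_true (v = v)) by reflexivity.
            destruct (pb (In v S)); ring.
            intros w _ Hne. rewrite (pb_false (w = v)) by auto. destruct (pb (In w S)); reflexivity.
          * simpl. rewrite (sum_single _ V v HV Hv). rewrite pb_true by reflexivity. ring.
            intros w _ Hne. rewrite pb_false by auto. reflexivity.
        + destruct Hc as [<-|[]].
          exists 1, (fun _ => 0), (fun _ => 0). split; [lra|split; [intros; lra|split; [intros; lra|split]]].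
          * intros S; simpl. rewrite (sumL_ext _ (fun _ => 0)), sumL_zero. ring.
            intros v _; destruct (pb (In v S)); reflexivity.
          * simpl. rewrite sumL_zero. ring.
      - destruct IH1 as [l1 [y1 [m1 [H1 [H2 [H3 [H4 H5]]]]]]].
        destruct IH2 as [l2 [y2 [m2 [G1 [G2 [G3 [G4 G5]]]]]]].
        exists (l1 + l2), (fun u => y1 u + y2 u), (fun S => m1 S + m2 S).
        split; [lra|split; [intros u; specialize (H2 u); specialize (G2 u); lra|
          split; [intros S; specialize (H3 S); specialize (G3 S); lra|split]]].
        + intros S; unfold cadd; simpl. rewrite H4, G4.
          rewrite (sumL_ext (fun v => if pb (In v S) then y1 v + y2 v else 0)
            (fun v => (if pb (In v S) then y1 v else 0) + (if pb (In v S) then y2 v else 0))), sumL_add. ring.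
          intros v _; destruct (pb (In v S)); ring.
        + unfold cadd; simpl. rewrite H5, G5, sumL_add. ring.
      - destruct IH as [l1 [y1 [m1 [H1 [H2 [H3 [H4 H5]]]]]]].
        exists (l * l1), (fun u => l * y1 u), (fun S => l * m1 S).
        split; [nra|split; [intros u; specialize (H2 u); nra|split; [intros S; specialize (H3 S); nra|split]]].
        + intros S; unfold cscale; simpl. rewrite H4.
          rewrite (sumL_ext (fun v => if pb (In v S) then l * y1 v else 0)
            (fun v => l * (if pb (In v S) then y1 v else 0))), sumL_scal. ring.
          intros v _; destruct (pb (In v S)); ring.
        + unfold cscale; simpl. rewrite H5, sumL_scal. ring. }
    destruct HQ as [lam [y [mu [Hlam [Hy [Hmu [Hf Hs]]]]]]].
    assert (Hyv : forall v, In v V -> y v <= lam).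
    { intros v Hv. assert (HS : In [v] (stable_sets N V)) by (apply single_stable; auto).
      specialize (Hc2 _ HS). rewrite Hf in Hc2.
      rewrite (sum_single _ V v HV Hv) in Hc2. rewrite pb_true in Hc2 by (simpl; auto).
      specialize (Hmu [v]). lra.
      intros w _ Hne. rewrite pb_false; auto. simpl; intros [E|[]]; congruence. }
    destruct (Rle_lt_or_eq_dec 0 lam Hlam) as [Hpos|Hz].
    + set (y' := fun u => y u / lam).
      assert (Hfeas : feasible_fun N (phiV V y')).
      { apply phiV_feasible; auto.
        - intros u; unfold y', Rdiv. apply Rmult_le_pos; auto. left; apply Rinv_0_lt_compat; auto.
        - intros S HS. specialize (Hc2 S HS). rewrite Hf in Hc2.
          rewrite (sumL_ext _ (fun v => /lam * (if pb (In v S) then y v else 0))), sumL_scal.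
          + specialize (Hmu S).
            apply Rmult_le_reg_l with lam; auto. rewrite <- Rmult_assoc, Rinv_r by lra. lra.
          + intros v _; unfold y'; destruct (pb (In v S)); [unfold Rdiv; ring | ring]. }
      destruct (M_exists N V (phiV V y') HV Hfeas) as [m HM].
      assert (Hm1 : m <= cs) by (apply Hcs; exists (phiV V y'); auto).
      assert (Hm2 : sumL (fun v => phiV V y' (vsub v vzero)) V <= m) by (apply HM; exists vzero; reflexivity).
      rewrite (sumL_ext _ (fun v => /lam * y v)) in Hm2.
      * rewrite sumL_scal in Hm2.
        assert (lam * (/ lam * sumL y V) <= lam * cs) by (apply Rmult_le_compat_l; lra).
        rewrite <- Rmult_assoc, Rinv_r in H by lra. lra.
      * intros v Hv. unfold phiV, y'.
        replace (vsub v vzero) with v by (apply functional_extensionality; intros i; unfold vsub, vzero; ring).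
        rewrite pb_true by auto. unfold Rdiv; ring.
    + subst lam. assert (sumL y V <= 0).
      { apply Rle_trans with (sumL (fun _ => 0) V); [apply sumL_le; auto | rewrite sumL_zero; lra]. }
      lra.
Qed.
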